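(* For every positive integer $k$, $$D_{\mathrm{sub}}[EFX_{id}(2,2k+1)] \;\ge\; D[LS(K(2k+1,k))],$$ where $D_{\mathrm{sub}}[EFX_{id}(2,2k+1)]$ denotes the deterministic value-query complexity of finding an EFX allocation for two players who share one identical valuation, with the valuation ranging only over submodular valuations on the goods $[2k+1]$.
   Context: Goods form a finite set $M$. A valuation is a function $v:2^M\to\mathbb{R}_{\ge 0}$ with $v(\emptyset)=0$ that is monotone: $v(S)\le v(T)$ whenever $S\subseteq T$. It is submodular if $v(S\cup\{x\})-v(S)\ge v(T\cup\{x\})-v(T)$ for all $S\subseteq T$ and $x\notin T$. An allocation to players $1,\dots,n$ is an ordered partition $(A_1,\dots,A_n)$ of $M$; parts may be empty. An allocation is EFX (envy-free up to any good) if for all players $i,j$ and every $g\in A_j$ we have $v_i(A_i)\ge v_i(A_j\setminus\{g\})$. The query problem for EFX is as follows. The algorithm knows $n$ and $M=[m]$, and may adaptively ask value queries: querying a set $S$ returns $v(S)$. It must output an EFX allocation. $D[EFX_{id}(n,m)]$ is the minimum, over deterministic algorithms, of the maximum, over valuations $v$ in the class considered, of the number of queries used. The subscript ''sub'' means the valuation is restricted to submodular valuations. Local Search on a finite undirected graph $G=(V,E)$ is as follows. An unknown function $f:V\to\mathbb{R}$ is accessed only through queries: querying $a\in V$ returns $f(a)$. The algorithm must output a local maximum, i.e. a vertex $a$ with $f(a)\ge f(b)$ for every edge $(a,b)\in E$. $D[LS(G)]$ is the minimum, over deterministic algorithms, of the maximum, over all $f$, of the number of queries used. The Kneser graph $K(n,k)$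 has as vertices the $k$-element subsets of $[n]$, with two vertices adjacent if and only if they are disjoint. *)

(* Defs.v *)
From mathcomp Require Import all_boot.
From Stdlib Require Import Reals.
Set Implicit Arguments. Unset Strict Implicit. Unset Printing Implicit Defensive.

(* A deterministic algorithm asking queries of type Q (each answered by a real
   number) and finally outputting an element of O.  Adaptivity: the next step
   may depend arbitrarily on the answer. *)
Inductive qtree (Q O : Type) : Type :=
| QOut : O -> qtree Q O
| QAsk : Q -> (R -> qtree Q O) -> qtree Q O.
Arguments QOut {Q O}.
Arguments QAsk {Q O}.

Fixpoint qrun (Q O : Type) (t : qtree Q O) (ans : Q -> R) : O :=
  match t with
  | QOut o => o
  | QAsk q k => qrun (k (ans q)) ans
  end.

Fixpoint qcost (Q O : Type) (t : qtree Q O) (ans : Q -> R) : nat :=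
  match t with
  | QOut _ => 0
  | QAsk q k => S (qcost (k (ans q)) ans)
  end.

(* "D[problem] <= d": some deterministic algorithm, on every admissible
   oracle ans, outputs a correct answer using at most d queries. *)
Definition solvable_within (Q O : Type) (admissible : (Q -> R) -> Prop)
    (correct : (Q -> R) -> O -> Prop) (d : nat) : Prop :=
  exists t : qtree Q O, forall ans, admissible ans ->
    correct ans (qrun t ans) /\ (qcost t ans <= d)%coq_nat.

Definition valuation (m : nat) (v : {set 'I_m} -> R) : Prop :=
  v set0 = 0%R /\
  (forall S, Rle 0 (v S)) /\
  (forall S T : {set 'I_m}, S \subset T -> Rle (v S) (v T)).

Definition submodular (m : nat) (v : {set 'I_m} -> R) : Prop :=
  forall (S T : {set 'I_m}) (x : 'I_m), S \subset T -> x \notin T ->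
    Rge (Rminus (v (x |: S)) (v S)) (Rminus (v (x |: T)) (v T)).

(* An allocation of goods [m] to players [n] (ordered partition, parts may be
   empty) is encoded by the assignment good |-> player. *)
Definition bundle (n m : nat) (a : {ffun 'I_m -> 'I_n}) (i : 'I_n) : {set 'I_m} :=
  [set g | a g == i].

Definition EFX_id (n m : nat) (v : {set 'I_m} -> R) (a : {ffun 'I_m -> 'I_n}) : Prop :=
  forall (i j : 'I_n) (g : 'I_m), g \in bundle a j ->
    Rge (v (bundle a i)) (v (bundle a j :\ g)).

Definition EFX_id_sub_within (n m d : nat) : Prop :=
  solvable_within (fun v : {set 'I_m} -> R => valuation v /\ submodular v)
    (fun v (a : {ffun 'I_m -> 'I_n}) => EFX_id v a) d.

Definition local_max (V : finType) (e : rel V) (f : V -> R) (a : V) : Prop :=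
  forall b, e a b -> Rge (f a) (f b).

Definition LS_within (V : finType) (e : rel V) (d : nat) : Prop :=
  solvable_within (fun _ : V -> R => True) (fun f a => local_max e f a) d.

Definition kneser_vertex (n k : nat) := {S : {set 'I_n} | #|S| == k}.
Definition kneser_adj (n k : nat) : rel (kneser_vertex n k) :=
  fun A B => [disjoint val A & val B].

(* Main.v *)
Require Import Defs.
From mathcomp Require Import all_boot.
From Stdlib Require Import Reals.
From Stdlib Require Import Lra Lia.
From mathcomp Require Import zify.
Set Implicit Arguments. Unset Strict Implicit.

Definition phi (k j : nat) : R :=
  (8 * INR (2 * k + 3) * INR j - 4 * INR j * (INR j + 1))%R.

Lemma INR_le_nat (a b : nat) : (a <= b)%N -> (INR a <= INR b)%R.
Proof. by move/leP; apply: le_INR. Qed.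

Lemma phi_step k s : (phi k s.+1 - phi k s = 8 * INR (2 * k + 3) - 8 * (INR s + 1))%R.
Proof. rewrite /phi S_INR; lra. Qed.

Lemma phi_mono k s t : (s < t)%N -> (t <= 2 * k + 1)%N -> (phi k s + 8 <= phi k t)%R.
Proof.
move=> st tk.
have h1 : (INR s + 1 <= INR t)%R by rewrite -S_INR; apply: INR_le_nat.
have h2 : (INR t <= 2 * INR k + 1)%R.
  have := @INR_le_nat _ _ tk; rewrite plus_INR mult_INR /=; lra.
have h3 : (INR (2 * k + 3) = 2 * INR k + 3)%R by rewrite plus_INR mult_INR /=; lra.
have h0 : (0 <= INR s)%R by apply: pos_INR.
rewrite /phi h3.
have e : ((8 * (2 * INR k + 3) * INR t - 4 * INR t * (INR t + 1)) -
   (8 * (2 * INR k + 3) * INR s - 4 * INR s * (INR s + 1)) =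
   (INR t - INR s) * (8 * (2 * INR k + 3) - 4 * (INR t + INR s + 1)))%R by ring.
have : (8 <= (INR t - INR s) * (8 * (2 * INR k + 3) - 4 * (INR t + INR s + 1)))%R.
  have ha : (1 <= INR t - INR s)%R by lra.
  have hb : (8 <= 8 * (2 * INR k + 3) - 4 * (INR t + INR s + 1))%R by lra.
  nra.
lra.
Qed.

Lemma phi_contra k x y : (x < y)%N -> (y <= 2 * k + 1)%N -> (phi k x >= phi k y)%R -> False.
Proof. move=> a b; have := phi_mono a b; lra. Qed.

Definition vert k (v0 : kneser_vertex (2 * k + 1) k) (S : {set 'I_(2 * k + 1)}) :
  kneser_vertex (2 * k + 1) k := odflt v0 (insub S).

Definition dl k v0 (f : kneser_vertex (2 * k + 1) k -> R) (S : {set 'I_(2 * k + 1)}) : R :=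
  if #|S| == k then atan (f (vert v0 S)) else 0%R.

Definition vf k v0 f (S : {set 'I_(2 * k + 1)}) : R := (phi k #|S| + dl v0 f S)%R.

Lemma dl_bound k v0 f S : (-2 < @dl k v0 f S < 2)%R.
Proof.
rewrite /dl; case: ifP => _; last lra.
have := atan_bound (f (vert v0 S)); have := PI_4; lra.
Qed.

Definition out k v0 (a : {ffun 'I_(2 * k + 1) -> 'I_2}) : kneser_vertex (2 * k + 1) k :=
  if #|bundle a ord0| == k then vert v0 (bundle a ord0) else vert v0 (bundle a ord_max).

Fixpoint tr k v0 (t : qtree {set 'I_(2 * k + 1)} {ffun 'I_(2 * k + 1) -> 'I_2}) :
  qtree (kneser_vertex (2 * k + 1) k) (kneser_vertex (2 * k + 1) k) :=
  match t with
  | QOut a => QOut (out v0 a)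
  | QAsk X c => if #|X| == k then QAsk (vert v0 X) (fun r => tr v0 (c (phi k #|X| + atan r)%R))
                else tr v0 (c (phi k #|X| + 0)%R)
  end.

Lemma tr_run k v0 t f :
  qrun (@tr k v0 t) f = out v0 (qrun t (vf v0 f)) /\
  (qcost (tr v0 t) f <= qcost t (vf v0 f))%coq_nat.
Proof.
elim: t => [a|X c IH] /=; first by split => //; apply: le_n.
have hv : vf v0 f X = (phi k #|X| + dl v0 f X)%R by [].
rewrite hv /dl; case: ifP => _ /=.
  by case: (IH (phi k #|X| + atan (f (vert v0 X)))%R) => -> ?; split => //; apply: le_n_S.
by case: (IH (phi k #|X| + 0)%R) => -> ?; split => //; apply: le_S.
Qed.

Lemma vf_valuation k v0 f : (0 < k)%N -> valuation (@vf k v0 f) /\ submodular (vf v0 f).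
Proof.
move=> k0.
have cardle : forall S0 : {set 'I_(2 * k + 1)}, (#|S0| <= 2 * k + 1)%N.
  by move=> S0; rewrite -[X in (_ <= X)%N]card_ord max_card.
have eqc : forall S0 T : {set 'I_(2 * k + 1)}, S0 \subset T -> #|S0| = #|T| -> S0 = T.
  by move=> S0 T0 ST e; apply/eqP; rewrite eqEcard ST e leqnn.
have ltc : forall S0 T : {set 'I_(2 * k + 1)}, S0 \subset T -> #|S0| <> #|T| -> (#|S0| < #|T|)%N.
  by move=> S0 T ST e; rewrite ltn_neqAle subset_leq_card // andbT; apply/eqP => //.
split; [split; [|split]|].
- rewrite /vf /dl cards0; have -> : (0 == k) = false by rewrite eq_sym; apply/negbTE; rewrite -lt0n.
  rewrite /phi /=; lra.
- move=> S0; rewrite /vf; have := dl_bound v0 f S0.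
  case E: #|S0| => [|n].
    rewrite /dl E; have -> : (0 == k) = false by rewrite eq_sym; apply/negbTE; rewrite -lt0n.
    rewrite /phi /=; lra.
  have := @phi_mono k 0 n.+1 erefl; rewrite -E cardle => /(_ erefl).
  rewrite /phi /=; lra.
- move=> S0 T ST; case: (eqVneq #|S0| #|T|) => e.
    by rewrite (eqc _ _ ST e); lra.
  have lt := ltc _ _ ST (elimN eqP e).
  have := phi_mono lt (cardle T); have := dl_bound v0 f S0; have := dl_bound v0 f T.
  rewrite /vf; lra.
- move=> S0 T x ST xT.
  have xS : x \notin S0 by apply: contra xT; apply: (subsetP ST).
  have cS : #|x |: S0| = #|S0|.+1 by rewrite cardsU1 xS.
  have cT : #|x |: T| = #|T|.+1 by rewrite cardsU1 xT.
  case: (eqVneq #|S0| #|T|) => e.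
    by rewrite (eqc _ _ ST e); lra.
  have lt := ltc _ _ ST (elimN eqP e).
  rewrite /vf cS cT.
  have := dl_bound v0 f S0; have := dl_bound v0 f T.
  have := dl_bound v0 f (x |: S0); have := dl_bound v0 f (x |: T).
  have := phi_step k #|S0|; have := phi_step k #|T|.
  have : (INR #|S0| + 1 <= INR #|T|)%R by rewrite -S_INR; apply: INR_le_nat.
  lra.
Qed.

Lemma bundle_compl n (a : {ffun 'I_n -> 'I_2}) (i j : 'I_2) :
  i != j -> bundle a j = ~: bundle a i.
Proof.
move=> ij; apply/setP => g; rewrite !inE.
move: ij; case: (a g) => [[|[|z]] Hz] //; case: i => [[|[|x]] Hx] //; case: j => [[|[|y]] Hy] //.
Qed.

Lemma card_sum n (a : {ffun 'I_n -> 'I_2}) (i j : 'I_2) :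
  i != j -> #|bundle a i| + #|bundle a j| = n.
Proof. by move=> ij; rewrite (bundle_compl a ij) cardsC card_ord. Qed.

Lemma vf_small k v0 f (X : {set 'I_(2 * k + 1)}) : #|X| != k -> @vf k v0 f X = phi k #|X|.
Proof. by move=> h; rewrite /vf /dl (negbTE h) Rplus_0_r. Qed.

Lemma unbal k v0 f (a : {ffun 'I_(2 * k + 1) -> 'I_2}) (i j : 'I_2) :
  EFX_id (@vf k v0 f) a -> (#|bundle a i| < k)%N -> (k + 2 <= #|bundle a j|)%N -> False.
Proof.
move=> H si bj.
have : (0 < #|bundle a j|)%N by apply: leq_trans bj; rewrite addn2.
case/card_gt0P => g gA.
have := H i j g gA.
have cd := cardsD1 g (bundle a j); rewrite gA /= in cd.
have cle : (#|bundle a j :\ g| <= 2 * k + 1)%N.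
  by rewrite -[X in (_ <= X)%N]card_ord max_card.
have lt : (#|bundle a i| < #|bundle a j :\ g|)%N.
  apply: (leq_trans si); move: bj; rewrite cd add1n addn2 ltnS; exact: ltnW.
rewrite vf_small; last by rewrite neq_ltn si.
rewrite vf_small; last by rewrite neq_ltn; apply/orP; right; move: bj; rewrite cd add1n addn2 ltnS.
exact: phi_contra lt cle.
Qed.

Lemma vert_val k v0 (b : kneser_vertex (2 * k + 1) k) : vert v0 (val b) = b.
Proof. by rewrite /vert valK. Qed.

Lemma val_vert k v0 (X : {set 'I_(2 * k + 1)}) : #|X| = k -> val (vert v0 X) = X.
Proof. by move=> h; rewrite /vert insubT ?h //= => ?. Qed.

Lemma locmax k v0 f (a : {ffun 'I_(2 * k + 1) -> 'I_2}) (i j : 'I_2) :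
  EFX_id (@vf k v0 f) a -> i != j -> #|bundle a i| = k ->
  local_max (@kneser_adj (2 * k + 1) k) f (vert v0 (bundle a i)).
Proof.
move=> H ij ci b; rewrite /kneser_adj (val_vert v0 ci) => dis.
have cb : #|val b| = k by apply/eqP; exact: (valP b).
have sub : val b \subset bundle a j by rewrite (bundle_compl a ij) -disjoints_subset disjoint_sym.
have cj : #|bundle a j| = k.+1 by have := card_sum a ij; rewrite ci; lia.
have : (0 < #|bundle a j :\: val b|)%N.
  by rewrite cardsD (setIidPr sub) cb cj subSnn.
case/card_gt0P => g; rewrite inE => /andP [gb gj].
have E : bundle a j :\ g = val b.
  apply/eqP; rewrite eq_sym eqEcard; apply/andP; split.
    apply/subsetP => x xb; rewrite !inE; have := subsetP sub x xb; rewrite inE => ->; rewrite andbT.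
    by apply/eqP => e; move: gb; rewrite -e xb.
  have := cardsD1 g (bundle a j); rewrite gj cj cb /=; lia.
have := H i j g gj; rewrite E /vf /dl ci cb eqxx vert_val => h.
apply: Rnot_lt_ge => lt; have := @atan_increasing _ _ lt; lra.
Qed.

Lemma exists_vertex k : exists v : kneser_vertex (2 * k + 1) k, True.
Proof.
have le : (k <= 2 * k + 1)%N by lia.
have inj : injective (widen_ord le) by move=> x y /(congr1 val) /= /val_inj.
have cS : #|[set widen_ord le i | i : 'I_k]| == k by rewrite card_imset // card_ord.
by exists (exist (fun S0 : {set 'I_(2 * k + 1)} => #|S0| == k) _ cS).
Qed.

Lemma efx_size k v0 f (a : {ffun 'I_(2 * k + 1) -> 'I_2}) :
  EFX_id (@vf k v0 f) a -> #|bundle a ord0| = k \/ #|bundle a ord_max| = k.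
Proof.
move=> H.
have ij : (ord0 : 'I_2) != ord_max by [].
have := card_sum a ij.
case: (eqVneq #|bundle a ord0| k) => e0; first by left.
case: (eqVneq #|bundle a ord_max| k) => e1; first by right.
move: e0 e1; set x := #|bundle a ord0|; set y := #|bundle a ord_max| => e0 e1 s.
case: (ltnP x k) => hx.
  exfalso; apply: (@unbal k v0 f a ord0 ord_max H hx); rewrite -/y; lia.
exfalso; apply: (@unbal k v0 f a ord_max ord0 H); rewrite -/x -/y; lia.
Qed.

Theorem theorem3p1 (k : nat) : (0 < k)%N ->
  forall d : nat, EFX_id_sub_within 2 (2 * k + 1) d ->
    LS_within (@kneser_adj (2 * k + 1) k) d.
Proof.
move=> k0 d [t Ht].
have [v0 _] := exists_vertex k.
exists (tr v0 t) => f _.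
have [Hv Hs] := vf_valuation v0 f k0.
have [Hefx Hc] := Ht (vf v0 f) (conj Hv Hs).
have [-> Hc'] := tr_run v0 t f.
split; last by apply: Nat.le_trans Hc' Hc.
rewrite /out; case: ifP => e.
  by apply: (locmax (j := ord_max)) => //; apply/eqP.
case: (efx_size Hefx) => h; first by rewrite h eqxx in e.
by apply: (locmax (j := ord0)).
Qed.
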